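(* Let $G$ be a fullerene graph and $S$ a perfect star packing of $G$. Then the number of connected components of $G-C(S)$ that are cycles of odd length is even.
   Context: A fullerene graph is a finite simple connected (equivalently, $3$-connected) plane cubic graph all of whose faces are pentagons or hexagons. A perfect star packing of $G$ is a spanning subgraph $S$ of $G$ every connected component of which is isomorphic to $K_{1,3}$; $C(S)$ denotes the set of centers (degree-$3$ vertices) of the stars in $S$. (Every connected component of $G-C(S)$ is a cycle.) *)

(* Defs.v *)
From mathcomp Require Import all_boot.
Set Implicit Arguments. Unset Strict Implicit. Unset Printing Implicit Defensive.

Definition simple_graph (V : finType) (adj : rel V) :=
  symmetric adj /\ irreflexive adj.

Definition connected_graph (V : finType) (adj : rel V) :=
  forall u v : V, connect adj u v.

Definition cubic (V : finType) (adj : rel V) :=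
  forall u : V, #|[pred v | adj u v]| = 3.

(* Plane embeddings via rotation systems: rot u cyclically permutes the
   neighbours of u.  Darts are ordered pairs (u,v) with adj u v. *)
Definition darts (V : finType) (adj : rel V) : {set V * V} :=
  [set d : V * V | adj d.1 d.2].

Definition rotation_system (V : finType) (adj : rel V) (rot : V -> V -> V) :=
  (forall u v, adj u v -> adj u (rot u v)) /\
  (forall u v w, adj u v -> adj u w -> fconnect (rot u) v w).

Definition face_step (V : finType) (rot : V -> V -> V) (d : V * V) : V * V :=
  (d.2, rot d.2 d.1).

Definition face_of (V : finType) (rot : V -> V -> V) (d : V * V) : {set V * V} :=
  [set d' | fconnect (face_step rot) d d'].

Definition faces (V : finType) (adj : rel V) (rot : V -> V -> V) : {set {set V * V}} :=
  [set face_of rot d | d in darts adj].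

(* Euler's formula V - E + F = 2 with 2E = #darts: genus 0 (sphere). *)
Definition spherical (V : finType) (adj : rel V) (rot : V -> V -> V) :=
  (#|V| + #|faces adj rot|) * 2 = #|darts adj| + 4.

(* every face is bounded by a 5-cycle or a 6-cycle: the facial walk has
   length 5 or 6 and passes through pairwise distinct vertices *)
Definition pent_hex_faces (V : finType) (adj : rel V) (rot : V -> V -> V) :=
  forall d, d \in darts adj ->
    (#|face_of rot d| = 5 \/ #|face_of rot d| = 6) /\
    #|[set x.1 | x in face_of rot d]| = #|face_of rot d|.

Definition fullerene (V : finType) (adj : rel V) :=
  [/\ simple_graph adj, connected_graph adj, cubic adj &
      exists rot : V -> V -> V,
        [/\ rotation_system adj rot, spherical adj rot & pent_hex_faces adj rot]].

Definition is_K13 (V : finType) (s : rel V) (K : {set V}) :=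
  #|K| = 4 /\
  exists2 c, c \in K &
    forall y z, y \in K -> z \in K -> s y z = (y != z) && ((y == c) || (z == c)).

Definition perfect_star_packing (V : finType) (adj : rel V) (s : rel V) :=
  [/\ symmetric s, (forall x y, s x y -> adj x y) &
      forall x, is_K13 s [set y | connect s x y]].

Definition centers (V : finType) (s : rel V) : {set V} :=
  [set v | #|[pred w | s v w]| == 3].

Definition del_rel (V : finType) (adj : rel V) (C : {set V}) : rel V :=
  fun x y => [&& adj x y, x \notin C & y \notin C].

Definition components (V : finType) (r : rel V) (W : {set V}) : {set {set V}} :=
  [set [set y | connect r x y] | x in W].

Definition is_cycle (V : finType) (r : rel V) (K : {set V}) :=
  exists p : seq V, [/\ uniq p, 3 <= size p, K = [set x in p] &
    forall x y, x \in K -> y \in K -> r x y = (y == next p x) || (x == next p y)].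

(* Main.v *)
Require Import Defs.
From mathcomp Require Import all_boot zify.
Set Implicit Arguments. Unset Strict Implicit. Unset Printing Implicit Defensive.

Section Rot.
Variables (V : finType) (adj : rel V) (rot : V -> V -> V).
Hypothesis adj_sym : symmetric adj.
Hypothesis cub : cubic adj.
Hypothesis rs : rotation_system adj rot.

Lemma fconn_rot v z u : adj v z -> fconnect (rot v) z u = adj v u.
Proof.
move=> avz; apply/idP/idP; last by apply: rs.2.
move=> /iter_findex <-; elim: (findex _ _ _) => //= n IH.
exact: rs.1.
Qed.

Lemma orbit_rot v z : adj v z ->
  orbit (rot v) z = [:: z; rot v z; rot v (rot v z)].
Proof.
move=> avz; rewrite /orbit /order.
have -> : #|fconnect (rot v) z| = 3.
  by rewrite -(cub v); apply: eq_card => u; rewrite inE /= fconn_rot.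
by [].
Qed.

Lemma rs3 v z : adj v z ->
  [/\ adj v (rot v z), adj v (rot v (rot v z)), rot v z != z,
      (rot v (rot v z) != z) && (rot v (rot v z) != rot v z) &
      rot v (rot v (rot v z)) = z].
Proof.
move=> avz.
have a1 : adj v (rot v z) by apply: rs.1.
have a2 : adj v (rot v (rot v z)) by apply: rs.1.
have U := orbit_uniq (rot v) z; rewrite orbit_rot // in U.
have Cy : fcycle (rot v) (orbit (rot v) z).
  by rewrite -fconnect_f fconn_rot.
rewrite orbit_rot // in Cy.
move: U Cy => /=; rewrite !inE !andbT => /andP[/norP[n1 n2] n3] /and3P[_ _ /eqP e].
split => //; first by rewrite eq_sym.
by rewrite eq_sym n2 eq_sym n3.
Qed.

Lemma rs_nb v z u : adj v z -> adj v u ->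
  [\/ u = z, u = rot v z | u = rot v (rot v z)].
Proof.
move=> avz avu; have : u \in orbit (rot v) z by rewrite -fconnect_orbit fconn_rot.
rewrite orbit_rot // !inE => /or3P[] /eqP ->; by [constructor 1|constructor 2|constructor 3].
Qed.

Lemma rs_inj v u u' : adj v u -> adj v u' -> rot v u = rot v u' -> u = u'.
Proof.
move=> au au' e; case: (rs3 au) => _ _ _ _ <-; case: (rs3 au') => _ _ _ _ <-.
by rewrite e.
Qed.

End Rot.

Lemma inv_even (T : finType) (A : {set T}) (f : T -> T) :
  {in A, forall x, f x \in A} -> {in A, forall x, f (f x) = x} ->
  {in A, forall x, f x != x} -> ~~ odd #|A|.
Proof.
move: {2}#|A| (leqnn #|A|) => n; elim: n A => [|n IH] A.
  by rewrite leqn0 => /eqP ->.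
move=> le fA ffA nfA.
case: (set_0Vmem A) => [->|[x xA]]; first by rewrite cards0.
have fxA := fA x xA; have nx := nfA x xA.
set B := A :\ x :\ f x.
have cA : #|A| = #|B|.+2.
  rewrite (cardsD1 x A) xA (cardsD1 (f x) (A :\ x)) in_setD1 nx fxA.
  by [].
have fB : {in B, forall y, f y \in B}.
  move=> y; rewrite !inE => /and3P[yfx yx yA].
  rewrite fA // andbT; apply/andP; split.
    by apply: contra yx => /eqP /(congr1 f); rewrite !ffA // => ->.
  by apply: contra yfx => /eqP e; rewrite -e ffA.
have IHB : ~~ odd #|B|.
  apply: IH.
  - by move: le; rewrite cA; lia.
  - exact: fB.
  - by move=> y; rewrite !inE => /and3P[_ _ yA]; apply: ffA.
  - by move=> y; rewrite !inE => /and3P[_ _ yA]; apply: nfA.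
by rewrite cA /= negbK.
Qed.

Lemma odd_sum_card (T : finType) (A : {pred T}) (F : T -> nat) :
  odd (\sum_(i in A) F i) = odd #|[set i in A | odd (F i)]|.
Proof.
have -> : odd (\sum_(i in A) F i) = odd (\sum_(i in A) odd (F i)).
  apply: (big_ind2 (fun a b => odd a = odd b)) => //.
    by move=> a b c d e1 e2; rewrite !oddD e1 e2.
  by move=> i _; case: (odd (F i)).
rewrite -sum1_card; congr odd.
rewrite big_mkcond [RHS]big_mkcond /=.
apply: eq_bigr => i _; rewrite inE.
by case: (i \in A); case: (odd (F i)).
Qed.


Section Cyc.
Variables (T : finType) (r : rel T) (W : {set T}) (a b : T -> T).
Hypothesis rsym : symmetric r.
Hypothesis rirr : irreflexive r.
Hypothesis rW : forall v w, r v w -> v \in W.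
Hypothesis rab : forall v, v \in W -> forall w, r v w = (w == a v) || (w == b v).
Hypothesis abn : forall v, v \in W -> a v != b v.

Lemma deg2 v m1 m2 y : r v m1 -> r v m2 -> m1 != m2 -> r v y -> y = m1 \/ y = m2.
Proof.
move=> h1; have vW := rW h1; move: h1; rewrite !rab // => h1 h2 n h3; move: n.
have := abn vW; rewrite eq_sym => n'.
case/orP: h3 => /eqP ->; case/orP: h1 => /eqP ->; case/orP: h2 => /eqP ->;
  rewrite ?eqxx //= => _; by [left|right].
Qed.

Variable x : T.
Hypothesis xW : x \in W.

Definition oth v u := if u == a v then b v else a v.
Definition hh (p : T * T) := (p.2, oth p.2 p.1).
Definition wk i := (iter i hh (x, a x)).1.

Lemma wkSS i : wk i.+2 = oth (wk i.+1) (wk i).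
Proof. by []. Qed.

Lemma wk_r i : r (wk i) (wk i.+1).
Proof.
elim: i => [|i IH]; first by rewrite /wk /= rab // eqxx.
rewrite wkSS.
have vW : wk i.+1 \in W by apply: (rW (w := wk i)); rewrite rsym.
by rewrite rab // /oth; case: ifP => _; rewrite eqxx ?orbT.
Qed.

Lemma wk_W i : wk i \in W.
Proof. exact: rW (wk_r i). Qed.

Lemma wk_nb i : wk i.+2 != wk i.
Proof.
rewrite wkSS /oth.
have vW := wk_W i.+1.
have := wk_r i; rewrite rsym rab // => /orP[] /eqP ->.
  by rewrite eqxx eq_sym abn.
by rewrite [b _ == a _]eq_sym (negbTE (abn vW)) abn.
Qed.

Lemma find_j : exists j, uniq (mkseq wk j) /\ wk j \in mkseq wk j.
Proof.
have ex : exists n, ~~ uniq (mkseq wk n.+1).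
  exists #|T|; apply/negP => /card_uniqP; rewrite size_mkseq => e.
  by have := max_card (mem (mkseq wk #|T|.+1)); rewrite e ltnn.
case: (ex_minnP ex) => m Hm Hmin; exists m.
have Um : uniq (mkseq wk m).
  case: m Hm Hmin => [|m] Hm Hmin //.
  apply/negPn/negP => /Hmin; lia.
by split => //; move: Hm; rewrite mkseqS rcons_uniq Um andbT negbK.
Qed.

Section WithJ.
Variable j : nat.
Hypothesis Uj : uniq (mkseq wk j).
Hypothesis Mj : wk j \in mkseq wk j.

Lemma inj_wk i k : i < j -> k < j -> wk i = wk k -> i = k.
Proof. by move=> ij kj; move/mkseq_uniqP: Uj; apply. Qed.

Lemma in_mk z : (z \in mkseq wk j) = [exists t : 'I_j, z == wk t].
Proof.
apply/mapP/existsP => [[t]|[t /eqP ->]].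
  rewrite mem_iota add0n => /andP[_ tj] ->; by exists (Ordinal tj).
by exists (nat_of_ord t) => //; rewrite mem_iota add0n ltn_ord.
Qed.

Lemma wkj0 : wk j = wk 0.
Proof.
have : exists2 i, i < j & wk j = wk i.
  by move: Mj; rewrite in_mk => /existsP[t /eqP e]; exists t.
case=> [[|i]] // ij e.
have jp : 0 < j by lia.
have r1 := wk_r i; rewrite rsym in r1.
have r2 := wk_r i.+1.
have r3 := wk_r j.-1; rewrite prednK // e in r3.
rewrite rsym in r3.
have n := wk_nb i; rewrite eq_sym in n.
case: (deg2 r1 r2 n r3) => e'.
  by have := inj_wk (i := j.-1) (k := i) ltac:(lia) ltac:(lia) e'; lia.
case: (ltngtP i.+2 j) => [lt|gt|eq].
- have := inj_wk (i := j.-1) (k := i.+2) ltac:(lia) ltac:(lia) e'.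
  move=> ee; have jE : j = i.+3 by lia.
  by move: (wk_nb i.+1); rewrite -jE e eqxx.
- lia.
- rewrite -eq /= in e'.
  by move: (wk_r i.+1); rewrite -e' rirr.
Qed.

Lemma j3 : 3 <= j.
Proof.
have j0 : 0 < j by move: Mj; case: (j).
have e := wkj0.
case: (ltngtP j 3) => // jl.
have : j = 1 \/ j = 2 by lia.
case=> ej; rewrite ej in e.
  by move: (wk_r 0); rewrite e rirr.
by move: (wk_nb 0); rewrite e eqxx.
Qed.

Lemma next_wk t : t < j -> next (mkseq wk j) (wk t) = wk t.+1.
Proof.
move=> tj.
have tin : wk t \in mkseq wk j by rewrite in_mk; apply/existsP; exists (Ordinal tj).
have idx : index (wk t) (mkseq wk j) = t.
  by rewrite -{1}(nth_mkseq (wk 0) wk tj) index_uniq // size_mkseq.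
have J3 := j3.
have pE : mkseq wk j = wk 0 :: [seq wk i | i <- iota 1 j.-1].
  by rewrite /mkseq -{1}(prednK (_ : 0 < j)) //; lia.
rewrite next_nth tin idx pE /=.
case: (ltngtP t j.-1) => [lt|gt|eq].
- by rewrite (nth_map 0) ?size_iota // nth_iota.
- lia.
- rewrite nth_default ?size_map ?size_iota ?eq //.
  have -> : j.-1.+1 = j by lia.
  by rewrite wkj0.
Qed.

Lemma mem_wk t : t < j -> wk t \in mkseq wk j.
Proof. by move=> tj; rewrite in_mk; apply/existsP; exists (Ordinal tj). Qed.

Lemma prev_wk t : t < j -> exists q,
  [/\ q \in mkseq wk j, r q (wk t), next (mkseq wk j) q = wk t & q != wk t.+1].
Proof.
move=> tj; have J3 := j3; case: t tj => [|t] tj.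
  exists (wk j.-1); split.
  - apply: mem_wk; lia.
  - by rewrite -wkj0; have := wk_r j.-1; rewrite prednK //; lia.
  - by rewrite next_wk ?prednK ?wkj0 //; lia.
  - apply/negP => /eqP e; have := inj_wk (i := j.-1) (k := 1) ltac:(lia) ltac:(lia) e; lia.
exists (wk t); split.
- apply: mem_wk; lia.
- exact: wk_r.
- by rewrite next_wk //; lia.
- by rewrite eq_sym wk_nb.
Qed.

Lemma conn_wk t : connect r x (wk t).
Proof.
elim: t => [|t IH]; first exact: connect0.
by apply: connect_trans IH _; apply: connect1; apply: wk_r.
Qed.

Lemma closed_p z y : z \in mkseq wk j -> r z y -> y \in mkseq wk j.
Proof.
rewrite in_mk => /existsP[[t tj] /eqP -> ] /= rty.
have [q [qin rq nq qn]] := prev_wk tj.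
rewrite rsym in rq.
have := deg2 (wk_r t) rq; rewrite eq_sym => /(_ _ qn rty) [->|->] //.
by rewrite -next_wk // mem_next mem_wk.
Qed.

Lemma Kp : [set y | connect r x y] = [set z in mkseq wk j].
Proof.
apply/setP => y; rewrite !inE; apply/idP/idP.
  case/connectP => q pq ->.
  have : x \in mkseq wk j by apply: (mem_wk (t := 0)); have := j3; lia.
  elim: q x pq => //= y' q IH z /andP[rzy pq] zin.
  by apply: IH pq _; apply: closed_p rzy.
by rewrite in_mk => /existsP[t /eqP ->]; apply: conn_wk.
Qed.

Lemma wk_cycle : is_cycle r [set y | connect r x y].
Proof.
exists (mkseq wk j); split => //.
- by rewrite size_mkseq j3.
- exact: Kp.
move=> z y; rewrite Kp !inE => zin yin.
move: zin; rewrite in_mk => /existsP[[t tj] /eqP -> ] /=.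
have [q [qin rq nq qn]] := prev_wk tj.
apply/idP/idP.
  move=> rty; rewrite rsym in rq.
  have := deg2 (wk_r t) rq; rewrite eq_sym => /(_ _ qn rty) [->|->].
    by rewrite next_wk // eqxx.
  by rewrite nq eqxx orbT.
case/orP => /eqP.
  by rewrite next_wk // => ->; apply: wk_r.
move: yin; rewrite in_mk => /existsP[[u uj] /eqP -> ] /=.
by rewrite next_wk // => ->; rewrite rsym; apply: wk_r.
Qed.
End WithJ.

Lemma comp_cycle : is_cycle r [set y | connect r x y].
Proof. by have [j [Uj Mj]] := find_j; apply: (wk_cycle Uj Mj). Qed.

End Cyc.


Section Main.
Variables (V : finType) (adj s : rel V) (rot : V -> V -> V).
Hypothesis adj_sym : symmetric adj.
Hypothesis adj_irr : irreflexive adj.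
Hypothesis cub : cubic adj.
Hypothesis rs : rotation_system adj rot.
Hypothesis phf : pent_hex_faces adj rot.
Hypothesis psp : perfect_star_packing adj s.

Let C := centers s.

Lemma star_x x : exists2 c, c \in [set y | connect s x y] &
  forall y w, y \in [set y | connect s x y] ->
    s y w = [&& w \in [set y | connect s x y], y != w & (y == c) || (w == c)].
Proof.
case: psp => ssym sadj /(_ x) [_ [c cK Hc]]; exists c => // y w yK.
case wK: (w \in _); first by rewrite Hc.
apply/negbTE/negP => syw; move/negbT/negP: wK; apply.
move: yK; rewrite !inE => xy; apply: connect_trans xy _; exact: connect1.
Qed.

Lemma star_center x c : c \in [set y | connect s x y] ->
  (forall y w, y \in [set y | connect s x y] ->
    s y w = [&& w \in [set y | connect s x y], y != w & (y == c) || (w == c)]) ->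
  [/\ c \in C, (forall w, s c w = adj c w) &
     forall y, y \in [set y | connect s x y] -> y != c -> y \notin C /\ forall w, s y w = (w == c)].
Proof.
move=> cK Hc.
case: psp => ssym sadj /(_ x) [K4 _].
set K := [set y | connect s x y] in cK Hc K4 *.
have scE : forall w, s c w = (w \in K :\ c).
  by move=> w; rewrite Hc // eqxx orTb andbT in_setD1 andbC eq_sym.
have c3 : #|[pred w | s c w]| = 3.
  rewrite (eq_card (B := K :\ c)); last by move=> w; rewrite inE /= scE.
  by move: K4; rewrite (cardsD1 c) cK => [[]].
have cC : c \in C by rewrite inE c3.
split => //.
  move=> w; apply/idP/idP => [/sadj //|].
  have := @subset_cardP _ [pred w | s c w] [pred w | adj c w].
  rewrite c3 cub => /(_ erefl) /(_ _) H aw.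
  have : [pred w | s c w] \subset [pred w | adj c w].
    by apply/subsetP => u; rewrite !inE; apply: sadj.
  by move=> /H /(_ w); rewrite !inE aw.
move=> y yK yc.
have syE : forall w, s y w = (w == c).
  move=> w; rewrite Hc // (negbTE yc) /=.
  case: (eqVneq w c) => [->|wc]; last by rewrite !andbF.
  by rewrite cK yc.
split => //; rewrite inE.
rewrite (eq_card (B := pred1 c)); first by rewrite card1.
by move=> w; rewrite inE /= syE.
Qed.

Lemma classify v :
  (v \in C -> (forall w, s v w = adj v w) /\ (forall w, adj v w -> w \notin C)) /\
  (v \notin C -> exists2 c, c \in C & forall w, s v w = (w == c)).
Proof.
have [c cK Hc] := star_x v.
have [cC sc Hy] := star_center cK Hc.
have vK : v \in [set y | connect s v y] by rewrite inE connect0.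
split.
  move=> vC; have vc : v = c.
    by apply/eqP; apply: contraLR vC => vc; case: (Hy _ vK vc).
  subst c; split => // w avw; rewrite -sc in avw.
  have wK := avw; rewrite Hc // in wK; case/and3P: wK => wK vw _.
  by case: (Hy _ wK); rewrite // eq_sym.
move=> vC; have vc : v != c by apply: contraNneq vC => ->.
by exists c => //; case: (Hy _ vK vc).
Qed.

Definition sp v := odflt v [pick c | s v c].

Lemma sp_spec v : v \notin C -> sp v \in C /\ forall w, s v w = (w == sp v).
Proof.
move=> vC; have [_ /(_ vC) [c cC Hc]] := classify v.
have -> : sp v = c.
  rewrite /sp; case: pickP => [c' /= |/(_ c)]; last by rewrite Hc eqxx.
  by rewrite Hc => /eqP.
by [].
Qed.

Lemma adj_sp v : v \notin C -> adj v (sp v).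
Proof.
move=> vC; case: psp => _ sadj _; apply: sadj.
by have [_ ->] := sp_spec vC.
Qed.

Lemma adj_C v w : v \notin C -> adj v w -> w \in C -> w = sp v.
Proof.
move=> vC avw wC; have [/(_ wC) [sw _] _] := classify w.
have [_ E] := sp_spec vC; apply/eqP; rewrite -E.
case: psp => ssym _ _; by rewrite ssym sw adj_sym.
Qed.

Lemma adj_CC v w : v \in C -> adj v w -> w \notin C.
Proof. by move=> vC; have [/(_ vC) [_ H] _] := classify v; apply: H. Qed.

Definition nx v := rot v (sp v).
Definition pv v := rot v (nx v).

Lemma leaf_spec v : v \notin C ->
  [/\ adj v (nx v), adj v (pv v), nx v != sp v,
      (pv v != sp v) && (pv v != nx v) & rot v (pv v) = sp v].
Proof. by move=> vC; have := rs3 cub rs (adj_sp vC). Qed.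

Lemma leaf_nC v : v \notin C -> nx v \notin C /\ pv v \notin C.
Proof.
move=> vC; have [a1 a2 n1 /andP[n2 _] _] := leaf_spec vC.
split; apply/negP => H.
  by move: (adj_C vC a1 H) => /eqP; rewrite (negbTE n1).
by move: (adj_C vC a2 H) => /eqP; rewrite (negbTE n2).
Qed.

Lemma leaf_nb v w : v \notin C -> adj v w -> [\/ w = sp v, w = nx v | w = pv v].
Proof. by move=> vC; apply: (rs_nb cub rs (adj_sp vC)). Qed.

Definition r := del_rel adj C.

Lemma rE v w : v \notin C -> r v w = (w == nx v) || (w == pv v).
Proof.
move=> vC; rewrite /r /del_rel vC /=.
have [a1 a2 n1 /andP[n2 _] _] := leaf_spec vC.
have [c1 c2] := leaf_nC vC.
apply/idP/idP.
  case/andP => avw wC; case: (leaf_nb vC avw) => E; rewrite E ?eqxx ?orbT //.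
  by have [spC _] := sp_spec vC; move: wC; rewrite E spC.
by case/orP => /eqP ->; rewrite ?a1 ?a2.
Qed.

Lemma r_nC v w : r v w -> v \notin C /\ w \notin C.
Proof. by rewrite /r /del_rel => /and3P[]. Qed.

Lemma r_sym : symmetric r.
Proof. by move=> v w; rewrite /r /del_rel adj_sym; case: (adj w v) => //=; exact: andbC. Qed.

Lemma r_irr : irreflexive r.
Proof. by move=> v; rewrite /r /del_rel adj_irr. Qed.

Definition fs := face_step rot.
Definition isdart (d : V * V) := adj d.1 d.2.

Lemma fs_dart d : isdart d -> isdart (fs d).
Proof. by rewrite /isdart /= => a; apply: rs.1; rewrite adj_sym. Qed.

Lemma fs_inj : {in isdart &, injective fs}.
Proof.
move=> [u v] [u' v']; rewrite /isdart /fs /face_step /= => a a' [e1 e2].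
subst v'; congr pair.
have a1 : adj v u by rewrite adj_sym; exact: a.
have a2 : adj v u' by rewrite adj_sym; exact: a'.
exact: (rs_inj cub rs a1 a2 e2).
Qed.

Lemma face_iter d : isdart d -> iter (order fs d) fs d = d.
Proof.
move=> dd; apply: (iter_order_in (S := isdart)) => //.
- by move=> x xd; apply: fs_dart.
- exact: fs_inj.
Qed.

Lemma face_card d : #|face_of rot d| = order fs d.
Proof. by rewrite /order /face_of; apply: eq_card => y; rewrite inE. Qed.

Lemma iter_dart n d : isdart d -> isdart (iter n fs d).
Proof. by move=> dd; elim: n => //= n IH; apply: fs_dart. Qed.

Lemma face_fst d i j : isdart d -> i < j -> j < order fs d ->
  (iter i fs d).1 != (iter j fs d).1.
Proof.
move=> dd ij jo.
have dd' : d \in darts adj by rewrite inE.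
have [_ inj] := phf dd'.
have /imset_injP Hinj : #|[set x.1 | x in face_of rot d]| == #|face_of rot d|.
  by rewrite inj.
apply/negP => /eqP e.
have : iter i fs d = iter j fs d.
  apply: Hinj e; rewrite inE; exact: fconnect_iter.
have U := orbit_uniq fs d.
rewrite -(nth_traject _ (ltn_trans ij jo)) -(nth_traject _ jo) => /eqP.
rewrite nth_uniq ?size_traject //; first by move/eqP => ij'; rewrite ij' ltnn in ij.
exact: ltn_trans ij jo.
Qed.

Definition phi v := rot (sp (nx v)) (nx v).
Definition SS := [set v | (v \notin C) && (pv (nx v) == v)].

Lemma phi_spec v : v \in SS -> [/\ phi v \in SS, phi (phi v) = v & phi v != v].
Proof.
rewrite inE => /andP[vC /eqP pvw].
set w := nx v in pvw *.
have [wC _] := leaf_nC vC.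
have [avw _ _ _ _] := leaf_spec vC.
have [c'C _] := sp_spec wC.
have [_ _ _ _ e1'] := leaf_spec wC.
have e1 : rot w v = sp w by rewrite -{1}pvw.
have acw : adj (sp w) w by rewrite adj_sym adj_sp.
have [acx _ _ _ _] := rs3 cub rs acw.
have xC : rot (sp w) w \notin C := adj_CC c'C acx.
have spx : sp (rot (sp w) w) = sp w.
  by apply/esym/adj_C => //; rewrite adj_sym.
rewrite /phi -/w.
set c' := sp w in e1 acw acx spx c'C *.
set x := rot c' w in acx xC spx *.
set z := nx x.
have [zC _] := leaf_nC xC.
set d := (v, w).
have dd : isdart d by [].
have i3 : iter 3 fs d = (x, z).
  by rewrite /= /fs /face_step /= e1 /z /nx spx.
have dd3 : isdart (x, z) by rewrite -i3; apply: iter_dart.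
have dd4 : isdart (fs (x, z)) by apply: fs_dart.
have dd5 : isdart (fs (fs (x, z))) by apply: fs_dart.
have dd' : d \in darts adj by rewrite inE.
have [[L|L] _] := phf dd'; rewrite face_card in L;
  have := face_iter dd; rewrite L.
  rewrite -[5]/(2 + 3) iterD i3 /= /fs /face_step /= => -[e2 e3].
  move: dd4; rewrite /isdart /fs /face_step /= e2 => azv.
  have : z = sp v.
    apply: (rs_inj cub rs _ (adj_sp vC)); first by rewrite adj_sym.
    by move: e3; rewrite e2 => ->.
  by move=> ezs; have [spC _] := sp_spec vC; move: zC; rewrite -/z ezs spC.
rewrite -[6]/(3 + 3) iterD i3 /= /fs /face_step /= => -[e2 e3].
move: dd4 dd5; rewrite /isdart /fs /face_step /= e2 => azy ayv.
set y := rot z x in e2 e3 azy ayv *.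
have yE : y = sp v.
  apply: (rs_inj cub rs _ (adj_sp vC)); first by rewrite adj_sym.
  by move: e3; rewrite e2 => ->.
have [yC _] := sp_spec vC; rewrite -yE in yC.
have yz : y = sp z by apply: adj_C.
have pvz : pv z = x.
  have [_ az _ _ e4] := leaf_spec zC.
  apply: (rs_inj cub rs az); first by rewrite adj_sym.
  by rewrite e4 -yz.
split.
- by rewrite inE xC /= -/z pvz.
- by rewrite /phi -/z -yz e2.
- have := face_fst (i := 0) (j := 3) dd erefl; rewrite L i3 /= => /(_ erefl).
  by rewrite eq_sym.
Qed.

Lemma inSS v : (v \in SS) = (v \notin C) && (pv (nx v) == v).
Proof. exact: in_set. Qed.

Lemma L_even : ~~ odd #|~: C|.
Proof.
set M := [set v | (v \notin C) && (nx (nx v) == v)].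
have inM v : (v \in M) = (v \notin C) && (nx (nx v) == v) by exact: in_set.
have MI : M = ~: C :&: M.
  by apply/setP => v; rewrite in_setI in_setC inM; case: (v \in C).
have SE : SS = ~: C :\: M.
  apply/setP => v; rewrite in_setD in_setC inM inSS; case vC: (v \in C) => //=.
  have vC' : v \notin C by rewrite vC.
  have [wC _] := leaf_nC vC'.
  have [_ _ _ /andP[_ n] _] := leaf_spec wC.
  have : r (nx v) v by rewrite r_sym rE // eqxx.
  rewrite rE // => /orP[] /eqP e.
    rewrite -e eqxx andbT /=; apply/negbTE; apply: contra n => /eqP h.
    by rewrite h -e.
  by move: n; rewrite -e eqxx andbT eq_sym.
rewrite -(cardsID M) -MI -SE oddD.
have -> : odd #|M| = false.
  apply/negbTE/(inv_even (f := nx)) => v; rewrite inM => /andP[vC /eqP e].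
  - have [wC _] := leaf_nC vC; by rewrite inM wC e /=.
  - by [].
  - have [a _ _ _ _] := leaf_spec vC; apply: contraTneq a => ->; by rewrite adj_irr.
have -> : odd #|SS| = false.
  apply/negbTE/(inv_even (f := phi)) => v vS; by case: (phi_spec vS).
by [].
Qed.

End Main.


Theorem mainTheorem11 (V : finType) (adj : rel V) (s : rel V) :
  fullerene adj -> perfect_star_packing adj s ->
  forall X : {set {set V}},
    (forall K : {set V}, K \in X <->
       [/\ K \in components (del_rel adj (centers s)) (~: centers s),
           is_cycle (del_rel adj (centers s)) K & odd #|K| ]) ->
    ~~ odd #|X|.
Proof.
move=> [[asym airr] _ cub [rot [rs _ phf]]] psp X HX.
have rdef : del_rel adj (centers s) = r adj s by [].
rewrite rdef in HX.
set P := components (r adj s) (~: centers s) in HX *.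
have rsym := r_sym s asym.
have rirr : irreflexive (r adj s) := r_irr s airr.
have cyc : forall K, K \in P -> is_cycle (r adj s) K.
  move=> K /imsetP[x xC ->].
  apply: (comp_cycle (W := ~: centers s) (a := nx s rot) (b := pv s rot)) => //.
  - by move=> v w /r_nC [vC _]; rewrite inE.
  - by move=> v; rewrite inE => vC w; apply: rE.
  - move=> v; rewrite inE => vC.
    by have [_ _ _ /andP[_ n] _] := leaf_spec cub rs psp vC; rewrite eq_sym.
have XE : X = [set K in P | odd #|K|].
  apply/setP => K; rewrite inE; apply/idP/idP.
    by move/HX => [-> _ ->].
  by case/andP => KP oK; apply/HX; split => //; apply: cyc.
have csym : connect_sym (r adj s) by apply: sym_connect_sym.
have eqi : {in ~: centers s & &, equivalence_rel (connect (r adj s))}.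
  move=> x y z _ _ _; split; first exact: connect0.
  by move=> xy; apply: same_connect.
have PE : P = equivalence_partition (connect (r adj s)) (~: centers s).
  rewrite /P /components /equivalence_partition.
  apply: eq_in_imset => x xC; apply/setP => y.
  have cl : closed (r adj s) (~: centers s).
    move=> u w /r_nC [uC wC]; by rewrite !in_setC uC wC.
  case cxy: (connect (r adj s) x y).
    have key : y \in ~: centers s by rewrite -(closed_connect cl cxy).
    by move: key; rewrite !inE => ->; rewrite cxy.
  by rewrite !inE cxy andbF.
have := card_partition (equivalence_partitionP eqi); rewrite -PE => E.
have := L_even asym airr cub rs phf psp.
by rewrite E odd_sum_card XE.
Qed.
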